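(* Let $R\subset S$ be an FCP almost-Prüfer extension. Then $\widetilde R=\widehat R$ is the least element $T\in[R,S]$ such that $T\subseteq S$ is integral.
   Context: All rings are commutative with identity. $[R,S]$ is the set of $R$-subalgebras of $S$; $R\subseteq S$ has FCP if every chain in $[R,S]$ is finite. A flat epimorphism is a flat ring morphism which is an epimorphism of commutative rings. $A\subseteq B$ is Prüfer if $A\subseteq U$ is a flat epimorphism for every $U\in[A,B]$. $\widetilde R$ (Prüfer hull) is the greatest $U\in[R,S]$ with $R\subseteq U$ Prüfer; $\widehat R$ (Morita hull) is the greatest $U\in[R,S]$ with $R\subseteq U$ a flat epimorphism. $R\subseteq S$ is almost-Prüfer if there is $T\in[R,S]$ with $R\subseteq T$ Prüfer and $T\subseteq S$ integral. *)

(* Defs.v *)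
(* Ring extensions R ⊆ S are modelled inside a fixed
   commutative ring S: every ring of [R,S] is a subring of S given as a
   predicate S -> Prop. *)
From mathcomp Require Import all_boot all_algebra.
Set Implicit Arguments. Unset Strict Implicit. Unset Printing Implicit Defensive.
Import GRing.Theory.
Local Open Scope ring_scope.

Section Defs.
Variable S : comNzRingType.

Definition incl (A B : S -> Prop) := forall x, A x -> B x.

Definition subring (A : S -> Prop) :=
  [/\ A 0, A 1, (forall x y, A x -> A y -> A (x - y))
   & (forall x y, A x -> A y -> A (x * y))].

Definition interm (A B U : S -> Prop) := [/\ subring U, incl A U & incl U B].

Definition is_mod (A : S -> Prop) (M : zmodType) (sc : S -> M -> M) :=
  forall a b (m n : M), A a -> A b ->
  [/\ sc a (m + n) = sc a m + sc a n, sc (a + b) m = sc a m + sc b m,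
      sc (a * b) m = sc a (sc b m) & sc 1 m = m].

Definition is_Alinear (A : S -> Prop) (M N : zmodType)
  (scM : S -> M -> M) (scN : S -> N -> N) (f : M -> N) :=
  (forall x y, f (x + y) = f x + f y) /\ (forall a m, A a -> f (scM a m) = scN a (f m)).

Definition balanced (A U : S -> Prop) (M : zmodType) (sc : S -> M -> M)
  (P : zmodType) (phi : M -> S -> P) :=
  [/\ (forall m m' u, U u -> phi (m + m') u = phi m u + phi m' u),
      (forall m u u', U u -> U u' -> phi m (u + u') = phi m u + phi m u')
    & (forall a m u, A a -> U u -> phi (sc a m) u = phi m (a * u))].

(* the element  sum_i m_i ⊗ u_i  of M ⊗_A U is zero (universal property) *)
Definition tensor_zero (A U : S -> Prop) (M : zmodType) (sc : S -> M -> M)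
  (s : seq (M * S)) :=
  forall (P : zmodType) (phi : M -> S -> P), balanced A U sc phi ->
    \sum_(p <- s) phi p.1 p.2 = 0.

Definition flat (A U : S -> Prop) :=
  forall (M N : zmodType) (scM : S -> M -> M) (scN : S -> N -> N),
    is_mod A scM -> is_mod A scN ->
    forall f : M -> N, is_Alinear A scM scN f -> injective f ->
    forall s : seq (M * S), (forall p, p \in s -> U p.2) ->
      tensor_zero A U scN [seq (f p.1, p.2) | p <- s] ->
      tensor_zero A U scM s.

Definition rmorph_on (C : comPzRingType) (U : S -> Prop) (f : S -> C) :=
  f 1 = 1 /\ forall x y, U x -> U y -> f (x + y) = f x + f y /\ f (x * y) = f x * f y.

Definition epi (A U : S -> Prop) :=
  forall (C : comPzRingType) (f g : S -> C), rmorph_on U f -> rmorph_on U g ->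
    (forall a, A a -> f a = g a) -> forall u, U u -> f u = g u.

Definition flat_epi (A U : S -> Prop) := flat A U /\ epi A U.

Definition Prufer (A B : S -> Prop) := forall U, interm A B U -> flat_epi A U.

Definition integral (T B : S -> Prop) :=
  forall x, B x -> exists p : {poly S},
    [/\ p \is monic, (forall i, T p`_i) & root p x].

Definition almost_Prufer (R B : S -> Prop) :=
  exists T, [/\ interm R B T, Prufer R T & integral T B].

(* FCP: every chain in [R,B] is finite (up to extensional equality) *)
Definition chain_in (R B : S -> Prop) (Ch : (S -> Prop) -> Prop) :=
  (forall U, Ch U -> interm R B U) /\
  (forall U V, Ch U -> Ch V -> incl U V \/ incl V U).

Definition finite_family (Ch : (S -> Prop) -> Prop) :=
  exists (n : nat) (F : nat -> S -> Prop),
    forall U, Ch U -> exists i, (i < n)%N /\ (forall x, U x <-> F i x).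

Definition FCP (R B : S -> Prop) :=
  forall Ch, chain_in R B Ch -> finite_family Ch.

Definition Prufer_hull (R B T : S -> Prop) :=
  [/\ interm R B T, Prufer R T & forall U, interm R B U -> Prufer R U -> incl U T].

Definition Morita_hull (R B T : S -> Prop) :=
  [/\ interm R B T, flat_epi R T & forall U, interm R B U -> flat_epi R U -> incl U T].

Definition least_integral (R B T : S -> Prop) :=
  [/\ interm R B T, integral T B & forall U, interm R B U -> integral U B -> incl T U].

End Defs.

(* Main.v *)
Require Import Defs.
From mathcomp Require Import all_boot all_algebra.
From HB Require Import structures.
From mathcomp Require Import boolp ring.
From mathcomp Require fingroup perm.
Set Implicit Arguments. Unset Strict Implicit. Unset Printing Implicit Defensive.
Import GRing.Theory.
Local Open Scope ring_scope.

Section DC.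
Variable X : zmodType.
Variable G : (X -> X) -> Prop.

Definition addit (h : X -> X) := forall a b, h (a + b) = h a + h b.
Definition comG (h : X -> X) := forall g, G g -> forall x, h (g x) = g (h x).
Definition dcP (e : X -> X) :=
  [/\ addit e, comG e & forall h, addit h -> comG h -> forall x, e (h x) = h (e x)].
Hypothesis GA : forall g, G g -> addit g.
Definition DC_of (GA' : forall g, G g -> addit g) := {e : X -> X | dcP e}.
Local Notation DC := (DC_of GA).
HB.instance Definition _ := gen_eqMixin DC.
HB.instance Definition _ := gen_choiceMixin DC.

Lemma addit0 h : addit h -> h 0 = 0.
Proof. by move=> ha; apply: (addrI (h 0)); rewrite -ha !addr0. Qed.
Lemma additN h : addit h -> forall a, h (- a) = - h a.
Proof. by move=> ha a; apply/eqP; rewrite -subr_eq0 opprK -ha addNr addit0. Qed.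

Lemma DC_ext (e e' : DC) : (forall x, sval e x = sval e' x) -> e = e'.
Proof.
case: e => e pe; case: e' => e' pe' /= H.
have E : e = e' by apply: funext.
subst e'; congr exist; exact: Prop_irrelevance.
Qed.

Lemma dc0 : dcP (fun _ => 0).
Proof.
split.
- by move=> a b; rewrite addr0.
- by move=> g Gg x; rewrite (addit0 (GA Gg)).
- by move=> h ha _ x; rewrite addit0.
Qed.
Definition zeroDC : DC := exist _ _ dc0.

Lemma dcadd (e e' : DC) : dcP (fun x => sval e x + sval e' x).
Proof.
case: e => e [ea ec ed]; case: e' => e' [ea' ec' ed'] /=; split.
- by move=> a b; rewrite ea ea' addrACA.
- by move=> g Gg x; rewrite ec // ec' // GA.
- by move=> h ha hc x; rewrite ed // ed' // ha.
Qed.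
Definition addDC (e e' : DC) : DC := exist _ _ (dcadd e e').

Lemma dcopp (e : DC) : dcP (fun x => - sval e x).
Proof.
case: e => e [ea ec ed] /=; split.
- by move=> a b; rewrite ea opprD.
- by move=> g Gg x; rewrite ec // (additN (GA Gg)).
- by move=> h ha hc x; rewrite ed // additN.
Qed.
Definition oppDC (e : DC) : DC := exist _ _ (dcopp e).

Lemma dc1 : dcP id.
Proof. by split. Qed.
Definition oneDC : DC := exist _ _ dc1.

Lemma dcmul (e e' : DC) : dcP (fun x => sval e (sval e' x)).
Proof.
case: e => e [ea ec ed]; case: e' => e' [ea' ec' ed'] /=; split.
- by move=> a b; rewrite ea' ea.
- by move=> g Gg x; rewrite ec' // ec.
- by move=> h ha hc x; rewrite ed' // ed.
Qed.
Definition mulDC (e e' : DC) : DC := exist _ _ (dcmul e e').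

Lemma addDCA : associative addDC.
Proof. by move=> a b c; apply: DC_ext => x /=; rewrite addrA. Qed.
Lemma addDCC : commutative addDC.
Proof. by move=> a b; apply: DC_ext => x /=; rewrite addrC. Qed.
Lemma add0DC : left_id zeroDC addDC.
Proof. by move=> a; apply: DC_ext => x /=; rewrite add0r. Qed.
Lemma addNDC : left_inverse zeroDC oppDC addDC.
Proof. by move=> a; apply: DC_ext => x /=; rewrite addNr. Qed.
HB.instance Definition _ := GRing.isZmodule.Build DC addDCA addDCC add0DC addNDC.

Lemma mulDCA : associative mulDC.
Proof. by move=> a b c; apply: DC_ext => x. Qed.
Lemma mulDCC : commutative mulDC.
Proof.
move=> [e [ea ec ed]] [e' [ea' ec' ed']]; apply: DC_ext => x /=.
exact: ed.
Qed.
Lemma mul1DC : left_id oneDC mulDC.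
Proof. by move=> a; apply: DC_ext => x. Qed.
Lemma mulDCDl : left_distributive mulDC addDC.
Proof. by move=> a b c; apply: DC_ext => x. Qed.
HB.instance Definition _ := GRing.Zmodule_isComPzRing.Build DC mulDCA mulDCC mul1DC mulDCDl.

Lemma inG_dcP g : G g -> comG g -> dcP g.
Proof. by move=> Gg cg; split => //; [exact: GA | move=> h _ hc x; rewrite hc]. Qed.

Lemma DC_val_add (e e' : DC) x : sval (e + e') x = sval e x + sval e' x.
Proof. by []. Qed.
Lemma DC_val_mul (e e' : DC) x : sval (e * e') x = sval e (sval e' x).
Proof. by []. Qed.
Lemma DC_val_1 x : sval (1 : DC) x = x.
Proof. by []. Qed.
End DC.

Section SR.
Variable S : comNzRingType.
Variable U : S -> Prop.
Hypothesis sU : subring U.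
Lemma sr0 : U 0. Proof. by case: sU. Qed.
Lemma sr1 : U 1. Proof. by case: sU. Qed.
Lemma srB x y : U x -> U y -> U (x - y). Proof. by case: sU => _ _ H _; apply: H. Qed.
Lemma srM x y : U x -> U y -> U (x * y). Proof. by case: sU => _ _ _ H; apply: H. Qed.
Lemma srN x : U x -> U (- x). Proof. by move=> Ux; rewrite -sub0r; apply: srB => //; exact: sr0. Qed.
Lemma srD x y : U x -> U y -> U (x + y).
Proof. by move=> Ux Uy; rewrite -[y]opprK; apply: srB => //; apply: srN. Qed.
End SR.

Section E.
Variables (S : comNzRingType) (R U : S -> Prop) (P : zmodType).
Hypotheses (sR : subring R) (sU : subring U) (RU : incl R U).

Definition Xp (psi : S -> S -> P) :=
  balanced R U (fun a m : S => a * m) psi /\ forall m w, ~ U w -> psi m w = 0.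
Definition Xt := {psi | Xp psi}.
HB.instance Definition _ := gen_eqMixin Xt.
HB.instance Definition _ := gen_choiceMixin Xt.

Lemma X_ext (psi psi' : Xt) : (forall m w, sval psi m w = sval psi' m w) -> psi = psi'.
Proof.
case: psi => e pe; case: psi' => e' pe' /= H.
have E : e = e' by apply: funext => m; apply: funext => w.
subst e'; congr exist; exact: Prop_irrelevance.
Qed.

Lemma xp0 : Xp (fun _ _ => 0).
Proof. by split=> //; split=> *; rewrite ?addr0. Qed.
Definition zeroX : Xt := exist _ _ xp0.
Lemma xpadd (a b : Xt) : Xp (fun m w => sval a m w + sval b m w).
Proof.
case: a => a [[a1 a2 a3] a4]; case: b => b [[b1 b2 b3] b4] /=; split; last first.
  by move=> m w nw; rewrite a4 // b4 // addr0.
split.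
- by move=> m m' u Uu; rewrite a1 // b1 // addrACA.
- by move=> m u u' Uu Uu'; rewrite a2 // b2 // addrACA.
- by move=> c m u Rc Uu; rewrite a3 // b3.
Qed.
Definition addX (a b : Xt) : Xt := exist _ _ (xpadd a b).
Lemma xpopp (a : Xt) : Xp (fun m w => - sval a m w).
Proof.
case: a => a [[a1 a2 a3] a4] /=; split; last first.
  by move=> m w nw; rewrite a4 // oppr0.
split.
- by move=> m m' u Uu; rewrite a1 // opprD.
- by move=> m u u' Uu Uu'; rewrite a2 // opprD.
- by move=> c m u Rc Uu; rewrite a3.
Qed.
Definition oppX (a : Xt) : Xt := exist _ _ (xpopp a).
Lemma addXA : associative addX.
Proof. by move=> a b c; apply: X_ext => m w /=; rewrite addrA. Qed.
Lemma addXC : commutative addX.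
Proof. by move=> a b; apply: X_ext => m w /=; rewrite addrC. Qed.
Lemma add0X : left_id zeroX addX.
Proof. by move=> a; apply: X_ext => m w /=; rewrite add0r. Qed.
Lemma addNX : left_inverse zeroX oppX addX.
Proof. by move=> a; apply: X_ext => m w /=; rewrite addNr. Qed.
HB.instance Definition _ := GRing.isZmodule.Build Xt addXA addXC add0X addNX.

Lemma xpL x (a : Xt) : Xp (fun m w => sval a (x * m) w).
Proof.
case: a => a [[a1 a2 a3] a4] /=; split; last by move=> m w nw; rewrite a4.
split.
- by move=> m m' u Uu; rewrite mulrDr a1.
- by move=> m u u' Uu Uu'; rewrite a2.
- by move=> c m u Rc Uu; rewrite mulrCA; exact: a3.
Qed.
Definition Lop x (a : Xt) : Xt := exist _ _ (xpL x a).

Lemma xpR y (Uy : U y) (a : Xt) :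
  Xp (fun m w => if `[< U w >] then sval a m (y * w) else 0).
Proof.
case: a => a [[a1 a2 a3] a4] /=; split; last first.
  by move=> m w nw; case: asboolP.
split.
- move=> m m' u Uu; case: asboolP => // _; rewrite a1 //; exact: srM.
- move=> m u u' Uu Uu'; rewrite !asboolT //; last exact: srD.
  by rewrite mulrDr a2 //; exact: srM.
- move=> c m u Rc Uu; case: asboolP => // _; case: asboolP => [_|]; last first.
    by case; apply: srM => //; exact: RU.
  by rewrite mulrCA; apply: a3 => //; exact: srM.
Qed.
Definition Rop y (Uy : U y) (a : Xt) : Xt := exist _ _ (xpR Uy a).

Definition GX (g : Xt -> Xt) :=
  (exists x, g = Lop x) \/ (exists y (Uy : U y), g = Rop Uy).

Lemma GXA g : GX g -> addit g.
Proof.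
rewrite /addit; case=> [[x ->]|[y [Uy ->]]] a b; apply: X_ext => m w //=.
by case: asboolP => _ //; rewrite addr0.
Qed.

Lemma Lop_com x : comG GX (Lop x).
Proof.
move=> g [[x' ->]|[y [Uy ->]]] a; apply: X_ext => m w //=.
by rewrite mulrCA.
Qed.

Lemma Rop_com y (Uy : U y) : comG GX (Rop Uy).
Proof.
move=> g [[x' ->]|[y' [Uy' ->]]] a; apply: X_ext => m w //=.
case: asboolP => // Uw; rewrite !asboolT; try exact: srM; first by rewrite mulrCA.
Qed.

Definition fL x : DC_of GXA := exist _ (Lop x) (inG_dcP GXA (or_introl (ex_intro _ x erefl)) (Lop_com x)).
Definition fR y (Uy : U y) : DC_of GXA :=
  exist _ (Rop Uy) (inG_dcP GXA (or_intror (ex_intro _ y (ex_intro _ Uy erefl))) (Rop_com Uy)).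
Definition gR y : DC_of GXA := match pselect (U y) with left Uy => fR Uy | right _ => 1 end.

Lemma fL_rmorph : rmorph_on U fL.
Proof.
split.
  apply: DC_ext => a; apply: X_ext => m w /=; by rewrite mul1r.
move=> x y Ux Uy; split; apply: DC_ext => a; apply: X_ext => m w /=.
  case: a => a [[a1 a2 a3] a4] /=.
  have [Uw|nUw] := pselect (U w); first by rewrite mulrDl a1.
  by rewrite !a4 // addr0.
by rewrite mulrCA mulrA.
Qed.

Lemma gR_rmorph : rmorph_on U gR.
Proof.
rewrite /gR; split.
  case: pselect => [U1|]; last by case; exact: sr1.
  apply: DC_ext => a; apply: X_ext => m w /=; rewrite mul1r.
  case: a => a [[a1 a2 a3] a4] /=.
  by case: asboolP => // nw; rewrite a4.
move=> x y Ux Uy; case: pselect => [Uxy|]; last by case; exact: srD.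
case: pselect => [Ux'|]; last by case.
case: pselect => [Uy'|]; last by case.
split.
  apply: DC_ext => a; apply: X_ext => m w /=.
  case: asboolP => [Uw|_]; last by rewrite addr0.
  case: a => a [[a1 a2 a3] a4] /=.
  rewrite mulrDl a2 //; exact: srM.
case: pselect => [Uxy'|]; last by case; exact: srM.
apply: DC_ext => a; apply: X_ext => m w /=.
case: asboolP => [Uw|_] //; rewrite asboolT; last exact: srM.
by rewrite mulrA [y * x]mulrC.
Qed.

Lemma fL_gR r : R r -> fL r = gR r.
Proof.
move=> Rr; rewrite /gR; case: pselect => [Ur|]; last by case; exact: RU.
apply: DC_ext => a; apply: X_ext => m w /=.
case: a => a [[a1 a2 a3] a4] /=.
case: asboolP => [Uw|nUw]; last by rewrite a4.
exact: a3.
Qed.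

Lemma epi_swap (hepi : epi R U) (phi : S -> S -> P) :
  balanced R U (fun a m : S => a * m) phi -> forall u, U u -> phi u 1 = phi 1 u.
Proof.
move=> [p1 p2 p3] u Uu.
pose phi0 := fun m w => if `[< U w >] then phi m w else 0.
have X0 : Xp phi0.
  split; last by move=> m w nw; rewrite /phi0; case: asboolP.
  split; rewrite /phi0.
  - by move=> m m' w Uw; rewrite asboolT // p1.
  - move=> m w w' Uw Uw'; rewrite !asboolT //; [exact: p2 | exact: srD].
  - move=> c m w Rc Uw; rewrite !asboolT //; [exact: p3 | apply: srM => //; exact: RU].
have := hepi _ _ _ fL_rmorph gR_rmorph fL_gR u Uu.
rewrite /gR; case: pselect => [Uu'|//] E.
have := congr1 (fun e : DC_of GXA => sval (sval e (exist _ phi0 X0)) 1 1) E => /=.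
by rewrite /phi0 !mulr1 !asboolT //; exact: sr1.
Qed.
End E.

Section Quot.
Local Open Scope quotient_scope.
Variables (T : zmodType) (H : T -> Prop).
Hypotheses (H0 : H 0) (HB : forall x y, H x -> H y -> H (x - y)).

Lemma HN x : H x -> H (- x). Proof. by move=> Hx; rewrite -sub0r; exact: HB. Qed.
Lemma HD x y : H x -> H y -> H (x + y).
Proof. by move=> Hx Hy; rewrite -[y]opprK; apply: HB => //; exact: HN. Qed.

Definition relH (x y : T) := `[< H (x - y) >].
Lemma relH_refl : reflexive relH.
Proof. by move=> x; apply/asboolP; rewrite subrr. Qed.
Lemma relH_sym : symmetric relH.
Proof.
move=> x y; apply/asboolP/asboolP => /HN; by rewrite opprB.
Qed.
Lemma relH_trans : transitive relH.
Proof.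
move=> y x z /asboolP h1 /asboolP h2; apply/asboolP.
by have := HD h1 h2; rewrite addrA subrK.
Qed.
Definition eH := EquivRel relH relH_refl relH_sym relH_trans.
Definition QT := {eq_quot eH}.
Definition piQ (x : T) : QT := \pi_QT x.

Lemma piQE x y : piQ x = piQ y <-> H (x - y).
Proof.
split; first by move/eqmodP => /asboolP.
by move=> h; apply/eqmodP/asboolP.
Qed.

Lemma reprQ x : H (repr (piQ x) - x).
Proof. by apply/piQE; rewrite /piQ reprK. Qed.

Definition zeroQ := piQ 0.
Definition addQ (a b : QT) := piQ (repr a + repr b).
Definition oppQ (a : QT) := piQ (- repr a).

Lemma addQ_pi x y : addQ (piQ x) (piQ y) = piQ (x + y).
Proof.
apply/piQE; have := HD (reprQ x) (reprQ y).
by rewrite addrACA opprD.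
Qed.
Lemma oppQ_pi x : oppQ (piQ x) = piQ (- x).
Proof. by apply/piQE; rewrite opprK addrC; have := HN (reprQ x); rewrite opprB. Qed.

Lemma allpi (a : QT) : exists x, a = piQ x.
Proof. by exists (repr a); rewrite /piQ reprK. Qed.

Lemma addQA : associative addQ.
Proof.
move=> a b c; case: (allpi a) => x ->; case: (allpi b) => y ->; case: (allpi c) => z ->.
by rewrite !addQ_pi addrA.
Qed.
Lemma addQC : commutative addQ.
Proof. by move=> a b; case: (allpi a) => x ->; case: (allpi b) => y ->; rewrite !addQ_pi addrC. Qed.
Lemma add0Q : left_id zeroQ addQ.
Proof. by move=> a; case: (allpi a) => x ->; rewrite addQ_pi add0r. Qed.
Lemma addNQ : left_inverse zeroQ oppQ addQ.
Proof. by move=> a; case: (allpi a) => x ->; rewrite oppQ_pi addQ_pi addNr. Qed.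
HB.instance Definition _ := Choice.on QT.
HB.instance Definition _ := GRing.isZmodule.Build QT addQA addQC add0Q addNQ.

Lemma piQD x y : piQ (x + y) = piQ x + piQ y.
Proof. by rewrite -addQ_pi. Qed.
Lemma piQ0 x : piQ x = 0 <-> H x.
Proof. by have := piQE x 0; rewrite subr0. Qed.
End Quot.

Section Cond.
Variables (S : comNzRingType) (R U : S -> Prop) (u : S).
Hypotheses (sR : subring R) (sU : subring U) (RU : incl R U) (Uu : U u).

Definition Icond r := R r /\ R (r * u).
Definition IU (z : S) := exists s : seq (S * S),
  (forall p, p \in s -> Icond p.1 /\ U p.2) /\ z = \sum_(p <- s) p.1 * p.2.

Lemma IU0 : IU 0.
Proof. by exists [::]; split=> //; rewrite big_nil. Qed.
Lemma IU1 r w : Icond r -> U w -> IU (r * w).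
Proof.
move=> Ir Uw; exists [:: (r, w)]; split; last by rewrite big_seq1.
by move=> p; rewrite inE => /eqP ->.
Qed.
Lemma IUB x y : IU x -> IU y -> IU (x - y).
Proof.
move=> [s [Hs ->]] [t [Ht ->]].
exists (s ++ [seq (- p.1, p.2) | p <- t]); split.
  move=> p; rewrite mem_cat => /orP[/Hs //|/mapP[q /Ht [[q1 q2] q3] ->]] /=.
  by split=> //; split; [exact: srN | rewrite mulNr; exact: srN].
by rewrite big_cat big_map /= -sumrN; congr (_ + _); apply: eq_bigr => p _; rewrite mulNr.
Qed.

Definition Mp (x : S) := `[< exists b, R b /\ R (x - b * u) >].
Definition Msub := {x : S | Mp x}.

Lemma Mp0 : Mp 0.
Proof. by apply/asboolP; exists 0; rewrite mul0r subr0; split; exact: sr0. Qed.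
Lemma MpB x y : Mp x -> Mp y -> Mp (x - y).
Proof.
move=> /asboolP[b [Rb Rx]] /asboolP[c [Rc Ry]]; apply/asboolP; exists (b - c); split.
  exact: srB.
suff -> : x - y - (b - c) * u = (x - b * u) - (y - c * u) by exact: srB.
ring.
Qed.
Lemma MpN x : Mp x -> Mp (- x).
Proof. by move=> h; rewrite -sub0r; apply: MpB => //; exact: Mp0. Qed.
Lemma MpD x y : Mp x -> Mp y -> Mp (x + y).
Proof. by move=> hx hy; rewrite -[y]opprK; apply: MpB => //; exact: MpN. Qed.
Lemma MpM a x : R a -> Mp x -> Mp (a * x).
Proof.
move=> Ra /asboolP[b [Rb Rx]]; apply/asboolP; exists (a * b); split; first exact: srM.
by have := srM sR Ra Rx; rewrite mulrBr mulrA.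
Qed.
Lemma Mp1 : Mp 1.
Proof. by apply/asboolP; exists 0; rewrite mul0r subr0; split; [exact: sr0|exact: sr1]. Qed.
Lemma Mpu : Mp u.
Proof. by apply/asboolP; exists 1; rewrite mul1r subrr; split; [exact: sr1|exact: sr0]. Qed.

Definition zeroM : Msub := exist (fun x : S => Mp x) 0 Mp0.
Definition addM (a b : Msub) : Msub := exist (fun x : S => Mp x) _ (MpD (valP a) (valP b)).
Definition oppM (a : Msub) : Msub := exist (fun x : S => Mp x) _ (MpN (valP a)).
Lemma addMA : associative addM.
Proof. by move=> a b c; apply: val_inj; rewrite /= addrA. Qed.
Lemma addMC : commutative addM.
Proof. by move=> a b; apply: val_inj; rewrite /= addrC. Qed.
Lemma add0M : left_id zeroM addM.
Proof. by move=> a; apply: val_inj; rewrite /= add0r. Qed.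
Lemma addNM : left_inverse zeroM oppM addM.
Proof. by move=> a; apply: val_inj; rewrite /= addNr. Qed.
HB.instance Definition _ := Choice.on Msub.
HB.instance Definition _ := GRing.isZmodule.Build Msub addMA addMC add0M addNM.

Definition scM (a : S) (m : Msub) : Msub :=
  match pselect (R a) with
  | left Ra => exist (fun x : S => Mp x) _ (MpM Ra (valP m))
  | right _ => m end.

Lemma scME a m : R a -> val (scM a m) = a * val m.
Proof. by move=> Ra; rewrite /scM; case: pselect. Qed.

Lemma scM_mod : is_mod R scM.
Proof.
move=> a b m n Ra Rb; split; apply: val_inj => /=.
- by rewrite !scME //= mulrDr.
- by rewrite !scME //= ?mulrDl //; exact: srD.
- by rewrite !scME //= ?mulrA //; exact: srM.
- by rewrite !scME ?mul1r //; exact: sr1.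
Qed.

Lemma mul_mod : is_mod R (fun a m : S => a * m).
Proof.
by move=> a b m n _ _; split; rewrite ?mulrDr ?mulrDl ?mulrA ?mul1r.
Qed.

Definition lam (x : S) : S :=
  match pselect (exists b, R b /\ R (x - b * u)) with
  | left h => sval (cid h) | right _ => 0 end.

Lemma lamP x : Mp x -> R (lam x) /\ R (x - lam x * u).
Proof.
move=> /asboolP h; rewrite /lam; case: pselect => // h'.
by case: (cid h') => b /=.
Qed.

Lemma Icond_diff x b c : R b -> R (x - b * u) -> R c -> R (x - c * u) -> Icond (b - c).
Proof.
move=> Rb Rxb Rc Rxc; split; first exact: srB.
suff -> : (b - c) * u = (x - c * u) - (x - b * u) by exact: srB.
ring.
Qed.

Definition PQ := QT IU0 IUB.
Definition phiM (m : Msub) (w : S) : PQ := piQ IU0 IUB (lam (val m) * w).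

Lemma phiM_eq x y w : R x -> R y -> R (y * u) -> U w -> x - y = 0 -> True.
Proof. by []. Qed.

Lemma piQ_cong b c w : Icond (b - c) -> U w -> piQ IU0 IUB (b * w) = piQ IU0 IUB (c * w).
Proof. by move=> Ib Uw; apply/piQE; rewrite -mulrBl; exact: IU1. Qed.

Lemma phiM_bal : balanced R U scM phiM.
Proof.
split.
- move=> m m' w Uw; rewrite /phiM -piQD -mulrDl; apply: piQ_cong => //.
  have [Rm Rmu] := lamP (valP m); have [Rm' Rmu'] := lamP (valP m').
  have [Rs Rsu] := lamP (valP (m + m')).
  apply: (@Icond_diff (val (m + m'))) => //; first exact: srD.
  suff -> : val (m + m') - (lam (val m) + lam (val m')) * u
            = (val m - lam (val m) * u) + (val m' - lam (val m') * u) by exact: srD.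
  rewrite /=; ring.
- by move=> m w w' Uw Uw'; rewrite /phiM -piQD mulrDr.
- move=> a m w Ra Uw; rewrite /phiM mulrA; apply: piQ_cong => //.
  have [Rm Rmu] := lamP (valP m); have [Rs Rsu] := lamP (valP (scM a m)).
  apply: (@Icond_diff (val (scM a m))) => //; first exact: srM.
  rewrite scME //.
  suff -> : a * val m - lam (val m) * a * u = a * (val m - lam (val m) * u) by exact: srM.
  ring.
Qed.

Lemma conductor_exists (hfl : flat R U) (hepi : epi R U) : IU 1.
Proof.
pose one : Msub := exist (fun x : S => Mp x) 1 Mp1.
pose uu : Msub := exist (fun x : S => Mp x) u Mpu.
have lin : is_Alinear R scM (fun a m : S => a * m) (fun m : Msub => val m).
  by split=> // a m Ra; rewrite scME.
have T : tensor_zero R U scM [:: (one, u); (uu, -1)].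
  have vi : injective (fun m : Msub => val m) by exact: val_inj.
  refine (hfl Msub S scM (fun a m : S => a * m) scM_mod mul_mod (fun m : Msub => val m)
    lin vi _ _ _).
- by move=> p; rewrite !inE => /orP[] /eqP -> //=; apply: (srN sU); exact: (sr1 sU).
- move=> P phi hb; rewrite /= !big_cons big_nil addr0.
  have sw := epi_swap sU RU hepi hb Uu.
  case: hb => _ h2 _.
  have h0 : phi u 0 = 0.
    by apply: (addrI (phi u 0)); rewrite -h2 ?addr0 //; exact: (sr0 sU).
  have hN : phi u (-1) = - phi u 1.
    apply/eqP; rewrite -subr_eq0 opprK addrC -h2; first by rewrite subrr h0.
    exact: (sr1 sU). by apply: (srN sU); exact: (sr1 sU).
  by rewrite hN sw subrr.
move: (T PQ phiM phiM_bal); rewrite !big_cons big_nil addr0 /phiM /=.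
rewrite -piQD => /piQ0 h.
have [R1 R1u] := lamP Mp1; have [Ru Ruu] := lamP Mpu.
have I1 : Icond (lam 1).
  split => //; suff -> : lam 1 * u = 1 - (1 - lam 1 * u) by apply: (srB sR) => //; exact: (sr1 sR).
  ring.
have Iu : Icond (lam u - 1).
  split; first by apply: (srB sR) => //; exact: (sr1 sR).
  by rewrite mulrBl mul1r -opprB; exact: (srN sR).
suff -> : 1 = lam 1 * u - (lam u - 1) * 1 - (lam 1 * u + lam u * -1).
  apply: IUB => //; apply: IUB; [exact: IU1 | apply: IU1 => //; exact: (sr1 sU)].
ring.
Qed.
End Cond.

Section Nak.
Import fingroup perm.
Variable S : comNzRingType.

Definition ideal (V J : S -> Prop) :=
  [/\ incl J V, J 0, (forall x y, J x -> J y -> J (x + y))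
    & (forall a x, V a -> J x -> J (a * x))].

Definition integral_elt (V : S -> Prop) (w : S) :=
  exists p : {poly S}, [/\ p \is monic, (forall i, V p`_i) & root p w].

Section Fix.
Variables (V J : S -> Prop).
Hypotheses (sV : subring V) (iJ : ideal V J).

Lemma J0 : J 0. Proof. by case: iJ. Qed.
Lemma JD x y : J x -> J y -> J (x + y). Proof. by case: iJ => _ _ H _; apply: H. Qed.
Lemma JM a x : V a -> J x -> J (a * x). Proof. by case: iJ => _ _ _ H; apply: H. Qed.
Lemma JV x : J x -> V x. Proof. by case: iJ => H _ _ _; apply: H. Qed.
Lemma JN x : J x -> J (- x).
Proof. by move=> Jx; rewrite -mulN1r; apply: JM => //; apply: (srN sV); exact: (sr1 sV). Qed.
Lemma JB x y : J x -> J y -> J (x - y).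
Proof. by move=> Jx Jy; apply: JD => //; exact: JN. Qed.

Lemma V_sum (I : Type) (r : seq I) (P : pred I) (F : I -> S) :
  (forall i, P i -> V (F i)) -> V (\sum_(i <- r | P i) F i).
Proof.
move=> H; apply: (big_ind V) => //; [exact: (sr0 sV) | exact: (srD sV)].
Qed.
Lemma J_sum (I : Type) (r : seq I) (P : pred I) (F : I -> S) :
  (forall i, P i -> J (F i)) -> J (\sum_(i <- r | P i) F i).
Proof.
move=> H; apply: (big_ind J) => //; [exact: J0 | exact: JD].
Qed.

Lemma Vnat (b : bool) : V (b%:R).
Proof. by case: b; [exact: (sr1 sV) | exact: (sr0 sV)]. Qed.

Lemma det_cong n (A : 'M[S]_n) :
  (forall i j, V (A i j) /\ J (A i j - (1%:M : 'M[S]_n) i j)) -> J (\det A - 1).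
Proof.
move=> HA; rewrite -[X in J (_ - X)](det1 S n) /determinant -sumrB; apply: J_sum => s _.
rewrite -mulrBr; apply: JM.
  case: (odd_perm s); rewrite ?expr1 ?expr0; [apply: (srN sV) |]; exact: (sr1 sV).
pose K x y := [/\ V x, V y & J (x - y)].
suff [] : K (\prod_i A i (s i)) (\prod_i (1%:M : 'M[S]_n) i (s i)) by [].
apply: (big_ind2 K).
- by split; [exact: (sr1 sV) | exact: (sr1 sV) | rewrite subrr; exact: J0].
- move=> x1 x2 y1 y2 [Vx1 Vx2 Jx] [Vy1 Vy2 Jy]; split; try exact: (srM sV).
  have -> : x1 * y1 - x2 * y2 = x1 * (y1 - y2) + y2 * (x1 - x2) by ring.
  by apply: JD; apply: JM.
- move=> i _; have [Va Ja] := HA i (s i); split=> //.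
  by rewrite mxE; exact: Vnat.
Qed.

Lemma single_lemma (w : S) (Q : {poly S}) :
  integral_elt V w -> (forall i, J Q`_i) -> Q.[w] = 1 -> J 1.
Proof.
move=> [p [mp Vp rp]] JQ Qw.
have sz : (0 < size p)%N by rewrite size_poly_gt0 monic_neq0.
have lc : p`_(size p).-1 = 1 by rewrite -lead_coefE; apply/monicP.
move: rp; rewrite rootE horner_coef => /eqP rp.
case E: (size p) sz lc rp => [|[|k]] // _.
  move=> lc; rewrite big_ord1 expr0 mulr1 lc => ->; exact: J0.
move=> lc; rewrite big_ord_recr /= lc mul1r => rp.
pose N := k.+1.
pose K : 'M[S]_N := \matrix_(i, j) (if (i < k)%N then ((j : nat) == i.+1)%:R else - p`_j).
pose v : 'cV[S]_N := \col_(i < N) w ^+ i.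
have Kv : K *m v = w *: v.
  apply/matrixP => i j; rewrite !mxE.
  have [hik|hik] := boolP (i < k)%N.
    under eq_bigr => l _ do rewrite !mxE hik.
    have hi1 : (i.+1 < N)%N by [].
    rewrite (bigD1 (Ordinal hi1)) //= eqxx mul1r big1 ?addr0 -?exprS //.
    move=> l hl; have : (l : nat) != i.+1.
      by apply: contra hl => /eqP h; apply/eqP/val_inj.
    by move/negbTE => ->; rewrite mul0r.
  under eq_bigr => l _ do rewrite !mxE (negbTE hik).
  have ik : (i : nat) = k.
    by apply/eqP; rewrite eqn_leq -ltnS ltn_ord leqNgt hik.
  rewrite -exprS ik.
  have -> : w ^+ k.+1 = - \sum_(l < N) p`_l * w ^+ l by apply/eqP; rewrite -addr_eq0 addrC rp.
  by rewrite -sumrN; apply: eq_bigr => l _; rewrite mulNr.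
have Kmv m : K ^+ m *m v = w ^+ m *: v.
  elim: m => [|m IH]; first by rewrite expr0 scale1r mul1mx.
  have -> : K ^+ m.+1 = K ^+ m *m K by rewrite exprSr.
  by rewrite -mulmxA Kv -scalemxAr IH scalerA -exprS.
pose M := \sum_(i < size Q) Q`_i *: K ^+ i.
have Mv : M *m v = v.
  rewrite mulmx_suml.
  under eq_bigr => i _ do rewrite -scalemxAl Kmv scalerA.
  by rewrite -scaler_suml -horner_coef Qw scale1r.
pose A : 'M[S]_N := 1%:M - M.
have Av : A *m v = 0 by rewrite mulmxBl mul1mx Mv subrr.
have dA : \det A = 0.
  have := congr1 (fun B => \adj A *m B) Av; rewrite /= mulmxA mul_adj_mx mul_scalar_mx mulmx0.
  move/matrixP => /(_ ord0 ord0); rewrite !mxE expr0 mulr1.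
  by [].
have Vb (b : bool) : V (1 *+ b).
  by case: b; rewrite ?mulr1n ?mulr0n; [exact: (sr1 sV) | exact: (sr0 sV)].
have VK m i j : V ((K ^+ m) i j).
  elim: m i j => [|m IH] i j.
    by have -> : K ^+ 0 = 1%:M by []; rewrite mxE.
  have -> : K ^+ m.+1 = K ^+ m *m K by rewrite exprSr.
  rewrite mxE; apply: V_sum => l _; apply: (srM sV) => //.
  rewrite mxE; case: ifP => _; first exact: Vnat.
  exact: (srN sV).
have JMij i j : J (M i j).
  rewrite summxE; apply: J_sum => l _; rewrite mxE mulrC; apply: JM => //.
have h : J (\det A - 1).
  apply: det_cong => i j; rewrite !mxE; split.
    apply: (srB sV); [exact: Vb | exact: JV].
  by rewrite addrAC subrr add0r; exact: JN.
rewrite dA sub0r in h.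
by rewrite -[1]opprK; exact: JN.
Qed.

End Fix.

Definition Adj (V : S -> Prop) (w : S) (z : S) :=
  exists q : {poly S}, (forall i, V q`_i) /\ z = q.[w].
Definition Ext (J A : S -> Prop) (z : S) := exists s : seq (S * S),
  (forall p, p \in s -> J p.1 /\ A p.2) /\ z = \sum_(p <- s) p.1 * p.2.

Lemma Adj_sub V w : subring V -> subring (Adj V w).
Proof.
move=> sV; split.
- by exists 0; rewrite horner0; split=> // i; rewrite coef0; exact: (sr0 sV).
- exists 1; rewrite hornerC; split=> // i; rewrite coefC.
  by case: (i == 0%N); [exact: (sr1 sV) | exact: (sr0 sV)].
- move=> x y [q [Vq ->]] [r [Vr ->]]; exists (q - r); rewrite hornerD hornerN; split=> // i.
  by rewrite coefB; apply: (srB sV).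
- move=> x y [q [Vq ->]] [r [Vr ->]]; exists (q * r); rewrite hornerM; split=> // i.
  by rewrite coefM; apply: V_sum => // l _; apply: (srM sV).
Qed.

Lemma Adj_incl V w : subring V -> incl V (Adj V w).
Proof.
move=> sV x Vx; exists x%:P; rewrite hornerC; split=> // i; rewrite coefC.
by case: (i == 0%N) => //; exact: (sr0 sV).
Qed.

Lemma Adj_w V w : subring V -> Adj V w w.
Proof.
move=> sV; exists 'X; rewrite hornerX; split=> // i; rewrite coefX.
by case: (i == 1%N); [exact: (sr1 sV) | exact: (sr0 sV)].
Qed.

Lemma Ext0 J A : Ext J A 0.
Proof. by exists [::]; split=> //; rewrite big_nil. Qed.
Lemma Ext1 J A j a : J j -> A a -> Ext J A (j * a).
Proof.
move=> Jj Aa; exists [:: (j, a)]; split; last by rewrite big_seq1.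
by move=> p; rewrite inE => /eqP ->.
Qed.
Lemma ExtD J A x y : Ext J A x -> Ext J A y -> Ext J A (x + y).
Proof.
move=> [s [Hs ->]] [t [Ht ->]]; exists (s ++ t); split; last by rewrite big_cat.
by move=> p; rewrite mem_cat => /orP[/Hs|/Ht].
Qed.

Lemma Ext_ideal V J A : subring A -> incl V A -> ideal V J -> ideal A (Ext J A).
Proof.
move=> sA VA iJ; split.
- move=> z [s [Hs ->]]; rewrite big_seq; apply: (V_sum sA) => p /Hs [Jp Ap].
  apply: (srM sA) => //; apply: VA; exact: (JV iJ).
- exact: Ext0.
- move=> x y; exact: ExtD.
- move=> a z Aa [s [Hs ->]]; exists [seq (p.1, a * p.2) | p <- s]; split.
    move=> p /mapP [q /Hs [Jq Aq] ->] /=; split=> //; exact: (srM sA).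
  by rewrite big_map mulr_sumr; apply: eq_bigr => p _ /=; rewrite mulrCA.
Qed.

Lemma Ext_poly V J w z : subring V -> ideal V J -> Ext J (Adj V w) z ->
  exists Q : {poly S}, (forall i, J Q`_i) /\ z = Q.[w].
Proof.
move=> sV iJ [s [Hs ->]]; elim: s Hs => [|[j a] s IH] Hs.
  by exists 0; rewrite big_nil horner0; split=> // i; rewrite coef0; exact: (J0 iJ).
have [Jj [q [Vq ->]]] : J j /\ Adj V w a by apply: (Hs (j, a)); rewrite inE eqxx.
have [Q [JQ EQ]] := IH (fun p hp => Hs p (ltac:(by rewrite inE hp orbT))).
exists (j *: q + Q); rewrite big_cons /= EQ hornerD hornerZ; split=> // i.
by rewrite coefD coefZ mulrC; apply: (JD iJ) => //; apply: (JM iJ).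
Qed.

Lemma G_ind (s : seq (S * S)) : forall V J, subring V -> ideal V J ->
  (forall p, p \in s -> J p.1 /\ integral_elt V p.2) ->
  J (1 - \sum_(p <- s) p.1 * p.2) -> J 1.
Proof.
elim: s => [|[j w] s IH] V J sV iJ Hs H1.
  by move: H1; rewrite big_nil subr0.
have [Jj iw] : J j /\ integral_elt V w by apply: (Hs (j, w)); rewrite inE eqxx.
pose V' := Adj V w; pose J' := Ext J V'.
have sV' : subring V' by exact: Adj_sub.
have VV' : incl V V' by exact: Adj_incl.
have iJ' : ideal V' J' by exact: (Ext_ideal sV' VV' iJ).
have JJ' x : J x -> J' x.
  by move=> Jx; rewrite -[x]mulr1; apply: Ext1 => //; exact: (sr1 sV').
have : J' 1.
  apply: (IH V' J' sV' iJ').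
    move=> p hp; have [Jp [q [mq Vq rq]]] := Hs p (ltac:(by rewrite inE hp orbT)); split; first exact: JJ'.
    by exists q; split=> // i; apply: VV'.
  have -> : 1 - \sum_(p <- s) p.1 * p.2 = (1 - \sum_(p <- (j, w) :: s) p.1 * p.2) + j * w.
    by rewrite big_cons /=; ring.
  by apply: ExtD; [exact: JJ' | apply: Ext1 => //; exact: Adj_w].
move=> /(Ext_poly sV iJ) [Q [JQ EQ]].
exact: (single_lemma sV iJ iw JQ (esym EQ)).
Qed.

Lemma conductor_in V x (s : seq (S * S)) : subring V ->
  (forall p, p \in s -> [/\ V p.1, V (p.1 * x) & integral_elt V p.2]) ->
  \sum_(p <- s) p.1 * p.2 = 1 -> V x.
Proof.
move=> sV Hs Hsum.
pose J := fun r => V r /\ V (r * x).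
have iJ : ideal V J.
  split.
  - by move=> r [].
  - by rewrite /J mul0r; split; exact: (sr0 sV).
  - by move=> a b [Va Vax] [Vb Vbx]; split; [exact: (srD sV) | rewrite mulrDl; exact: (srD sV)].
  - by move=> a r Va [Vr Vrx]; split; [exact: (srM sV) | rewrite -mulrA; exact: (srM sV)].
have : J 1.
  apply: (G_ind sV iJ (s := s)); last by rewrite Hsum subrr; exact: (J0 iJ).
  by move=> p /Hs [V1 V2 V3].
by case=> _; rewrite mul1r.
Qed.
End Nak.

Theorem proposition4p18 (S : comNzRingType) (R : S -> Prop) :
  subring R ->
  FCP R (fun _ => True) ->
  almost_Prufer R (fun _ => True) ->
  exists T : S -> Prop,
    [/\ Prufer_hull R (fun _ => True) T,
        Morita_hull R (fun _ => True) T
      & least_integral R (fun _ => True) T].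
Proof.
move=> sR _ [T0 [iT0 PT0 intT0]].
have [sT0 RT0 _] := iT0.
have feT0 : flat_epi R T0 by apply: PT0; split.
have morita : forall U, interm R (fun _ => True) U -> flat_epi R U -> incl U T0.
  move=> U [sU RU _] [hfl hepi] u Uu.
  have [s [Hs Hsum]] := conductor_exists sR sU RU Uu hfl hepi.
  apply: (conductor_in sT0 (s := s)); last by rewrite -Hsum.
  move=> p /Hs [[Rp Rpu] Up]; split; try exact: RT0.
  exact: intT0.
exists T0; split.
- split=> // U iU PU; apply: morita => //; apply: PU.
  by case: iU => sU RU _; split.
- by split.
- split=> // U [sU RU _] intU t Tt.
  have [s [Hs Hsum]] := conductor_exists sR sT0 RT0 Tt feT0.1 feT0.2.
  apply: (conductor_in sU (s := s)); last by rewrite -Hsum.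
  move=> p /Hs [[Rp Rpu] Up]; split; try exact: RU.
  exact: intU.
Qed.
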